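(* Assume $\mathscr{R}_0>\frac{\sigma_m(\mu+r)C_I}{\mu\beta}$ (equivalently $C_I<\frac{\beta A}{(\mu+r)(\mu+\beta+\rho)}$) and $$\frac{\beta^2\sigma_s}{(\mu+r)\sigma_m^2}\le C_I.$$ Then $E^*$ is the unique endemic equilibrium of (3) if $1<\mathscr{R}_0\le 1+\frac{\sigma_m(\mu+r)}{\mu\beta}C_I$, and $E_1^*$ is the unique endemic equilibrium of (3) if $\mathscr{R}_0>1+\frac{\sigma_m(\mu+r)}{\mu\beta}C_I$.
   Context: Let $A,\sigma_m,\sigma_s,\mu,\rho,\beta,r,C_I$ be positive constants. Write $[x]^+=\max\{0,x\}$ and $T(I_s)=rI_s$ if $I_s<C_I$, $T(I_s)=rC_I$ if $I_s\ge C_I$. System (3) is $$S'=A-\sigma_mSI_m-\sigma_sS[I_s-C_I]^+-\mu S,\quad I_m'=\sigma_mSI_m+\sigma_sS[I_s-C_I]^+-(\mu+\rho+\beta)I_m,\quad I_s'=\beta I_m-T(I_s)-\mu I_s.$$ $\mathscr{R}_0=\frac{A\sigma_m}{\mu(\mu+\beta+\rho)}$. An endemic equilibrium is an equilibrium of (3) with $S,I_m,I_s>0$. $E^*=(S^*,I_m^*,I_s^* )$ with $S^*=\frac{\mu+\beta+\rho}{\sigma_m}$, $I_m^*=\frac{\mu(\mathscr{R}_0-1)}{\sigma_m}$, $I_s^*=\frac{\mu\beta(\mathscr{R}_0-1)}{\sigma_m(\mu+r)}$. Let $p=\frac{(\mu+r)\sigma_m\sigma_sC_I}{\mu(\mu\sigma_m+\beta\sigma_s)}$,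 $q=\frac{\mu\sigma_m}{\mu\sigma_m+\beta\sigma_s}$, and $S_{1,2}^*=\frac{\mu+\beta+\rho}{2\sigma_m}\big\{\mathscr{R}_0-p+q\mp\sqrt{(\mathscr{R}_0-p-q)^2-4pq}\big\}$ (minus sign for $S_1^*$, plus for $S_2^*$), $I_{m_i}^*=\frac{\mu\mathscr{R}_0}{\sigma_m}-\frac{\mu S_i^*}{\mu+\beta+\rho}$, $I_{s_i}^*=\frac{\beta\mathscr{R}_0}{\sigma_m}-\frac{\beta S_i^*}{\mu+\beta+\rho}-\frac{rC_I}{\mu}$, $E_i^*=(S_i^*,I_{m_i}^*,I_{s_i}^* )$, $i=1,2$ (these are the candidate equilibria in the region $I_s>C_I$). ''$E_i^*$ exists'' / ''$E_i^*$ is an endemic equilibrium'' means $S_i^*$ is real, $S_i^*>0$, $I_{m_i}^*>0$ and $I_{s_i}^*>C_I$; ''$E^*$ exists'' means $E^*$ is an endemic equilibrium. *)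

(* Defs.v *)
From Stdlib Require Import Reals Lra.
Open Scope R_scope.

Definition pos_part (x : R) : R := Rmax 0 x.

Definition Ttreat (r CI Is : R) : R :=
  if Rlt_dec Is CI then r * Is else r * CI.

Definition rhs_S (A sm ss mu CI S Im Is : R) : R :=
  A - sm * S * Im - ss * S * pos_part (Is - CI) - mu * S.
Definition rhs_Im (sm ss mu rho beta CI S Im Is : R) : R :=
  sm * S * Im + ss * S * pos_part (Is - CI) - (mu + rho + beta) * Im.
Definition rhs_Is (mu beta r CI Im Is : R) : R :=
  beta * Im - Ttreat r CI Is - mu * Is.

Definition endemic_eq (A sm ss mu rho beta r CI : R) (E : R * R * R) : Prop :=
  let '(Sv, Im, Is) := E in
  0 < Sv /\ 0 < Im /\ 0 < Is /\
  rhs_S A sm ss mu CI Sv Im Is = 0 /\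
  rhs_Im sm ss mu rho beta CI Sv Im Is = 0 /\
  rhs_Is mu beta r CI Im Is = 0.

Definition Rzero (A sm mu rho beta : R) : R := A * sm / (mu * (mu + beta + rho)).

Definition Estar (A sm mu rho beta r : R) : R * R * R :=
  ((mu + beta + rho) / sm,
   mu * (Rzero A sm mu rho beta - 1) / sm,
   mu * beta * (Rzero A sm mu rho beta - 1) / (sm * (mu + r))).

Definition pp (sm ss mu beta r CI : R) : R :=
  (mu + r) * sm * ss * CI / (mu * (mu * sm + beta * ss)).
Definition qq (sm ss mu beta : R) : R := mu * sm / (mu * sm + beta * ss).

Definition discS (A sm ss mu rho beta r CI : R) : R :=
  (Rzero A sm mu rho beta - pp sm ss mu beta r CI - qq sm ss mu beta) ^ 2
  - 4 * pp sm ss mu beta r CI * qq sm ss mu beta.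

Definition S1star (A sm ss mu rho beta r CI : R) : R :=
  (mu + beta + rho) / (2 * sm) *
  (Rzero A sm mu rho beta - pp sm ss mu beta r CI + qq sm ss mu beta
   - sqrt (discS A sm ss mu rho beta r CI)).

Definition E1star (A sm ss mu rho beta r CI : R) : R * R * R :=
  let S1 := S1star A sm ss mu rho beta r CI in
  (S1,
   mu * Rzero A sm mu rho beta / sm - mu * S1 / (mu + beta + rho),
   beta * Rzero A sm mu rho beta / sm - beta * S1 / (mu + beta + rho) - r * CI / mu).

(* Main.v *)
Require Import Defs.
From Stdlib Require Import Reals Lra Psatz.
Open Scope R_scope.
Ltac nz := repeat split; intro; nra.
Lemma pos_part_neg x : x <= 0 -> pos_part x = 0.
Proof. intros; unfold pos_part; apply Rmax_left; lra. Qed.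
Lemma pos_part_pos x : 0 <= x -> pos_part x = x.
Proof. intros; unfold pos_part; apply Rmax_right; lra. Qed.
Lemma T_lt r CI Is : Is < CI -> Ttreat r CI Is = r*Is.
Proof. intros; unfold Ttreat; destruct (Rlt_dec Is CI); lra. Qed.
Lemma T_ge r CI Is : CI <= Is -> Ttreat r CI Is = r*CI.
Proof. intros; unfold Ttreat; destruct (Rlt_dec Is CI); lra. Qed.
Lemma core1 R0 p q c t : 0<c -> 0<q -> p = c*(1-q) -> 1 <= q*(1+c) -> R0 <= 1+c ->
  t^2 - (R0+p-q)*t + p*R0 = 0 -> c <= t -> t = c /\ R0 = 1+c.
Proof.
  intros Hc Hq Hp H1 HR Hg Ht.
  assert (Hgc: c^2 - (R0+p-q)*c + p*R0 = c*q*(c+1-R0)) by (subst p; ring).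
  assert (Hdiff: (t^2 - (R0+p-q)*t + p*R0) - (c^2 - (R0+p-q)*c + p*R0)
     = (t-c)*(t+c-(R0+p-q))) by ring.
  assert (Hv0: 2*c - (R0+p-q) = c + q*(1+c) - R0) by (subst p; ring).
  assert (Hv: 0 <= 2*c - (R0+p-q)) by lra.
  assert (A1: 0 <= c*q*(c+1-R0)).
  { apply Rmult_le_pos; [apply Rmult_le_pos; lra|lra]. }
  assert (A2: 0 <= (t-c)*(t+c-(R0+p-q))) by (apply Rmult_le_pos; lra).
  assert (B1: c*q*(c+1-R0) = 0) by lra.
  assert (B2: (t-c)*(t+c-(R0+p-q)) = 0) by lra.
  split.
  - destruct (Rmult_integral _ _ B2); lra.
  - destruct (Rmult_integral _ _ B1) as [H|H]; [|lra].
    destruct (Rmult_integral _ _ H); lra.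
Qed.

Lemma core2 R0 p q c t : 0<c -> 0<q -> p = c*(1-q) -> R0 > 1+c ->
  t^2 - (R0+p-q)*t + p*R0 = 0 -> c <= t ->
  t = ((R0+p-q) + sqrt ((R0-p-q)^2 - 4*p*q))/2.
Proof.
  intros Hc Hq Hp HR Hg Ht.
  assert (Hgc: c^2 - (R0+p-q)*c + p*R0 = c*q*(c+1-R0)) by (subst p; ring).
  assert (Hneg: c*q*(c+1-R0) < 0).
  { assert (0 < c*q) by nra. nra. }
  assert (Hdiff: (t^2 - (R0+p-q)*t + p*R0) - (c^2 - (R0+p-q)*c + p*R0)
     = (t-c)*(t+c-(R0+p-q))) by ring.
  assert (Hpos: 0 < (t-c)*(t+c-(R0+p-q))) by lra.
  assert (Hb: 0 < t + c - (R0+p-q)) by nra.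
  assert (HD: (R0-p-q)^2 - 4*p*q = (2*t - (R0+p-q))^2).
  { replace ((2*t - (R0+p-q))^2) with
      ((R0-p-q)^2 - 4*p*q + 4*(t^2 - (R0+p-q)*t + p*R0)) by ring.
    rewrite Hg. ring. }
  rewrite HD, sqrt_pow2 by lra. field.
Qed.

Lemma core3 R0 p q c : 0<c -> 0<q -> p = c*(1-q) -> R0 > 1+c ->
  let D := (R0-p-q)^2 - 4*p*q in
  let t1 := ((R0+p-q) + sqrt D)/2 in
  0 <= D /\ t1^2 - (R0+p-q)*t1 + p*R0 = 0 /\ c < t1 /\ t1 < R0.
Proof.
  intros Hc Hq Hp HR D t1.
  assert (Hgc: c^2 - (R0+p-q)*c + p*R0 = c*q*(c+1-R0)) by (subst p; ring).
  assert (Hneg: c*q*(c+1-R0) < 0).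
  { assert (0 < c*q) by nra. nra. }
  assert (E4c: 4*(c^2 - (R0+p-q)*c + p*R0) = (2*c - (R0+p-q))^2 - D) by (unfold D; ring).
  assert (E4R: 4*(R0^2 - (R0+p-q)*R0 + p*R0) = (2*R0 - (R0+p-q))^2 - D) by (unfold D; ring).
  assert (HgR: R0^2 - (R0+p-q)*R0 + p*R0 = q*R0) by ring.
  assert (HgR4: 0 < 4*(R0^2 - (R0+p-q)*R0 + p*R0)) by (rewrite HgR; nra).
  assert (Ddef: D = (R0-p-q)^2 - 4*p*q) by reflexivity.
  clearbody D.
  assert (Hsq: 0 <= (2*c-(R0+p-q))^2) by apply pow2_ge_0.
  assert (HDp: 0 < D) by lra.
  assert (Hs: sqrt D * sqrt D = D) by (apply sqrt_sqrt; lra).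
  assert (Hs0: 0 <= sqrt D) by apply sqrt_pos.
  split; [lra|]. split.
  { unfold t1. replace ((((R0 + p - q) + sqrt D)/2)^2) with
      (((R0+p-q)^2 + 2*(R0+p-q)*sqrt D + sqrt D * sqrt D)/4) by field.
    rewrite Hs, Ddef. field. }
  assert (Hp2: 0 < 2*R0 - (R0+p-q)) by (subst p; nra).
  split; unfold t1; nra.
Qed.

Lemma branch_lt A sm ss mu rho beta r CI Sv Im Is :
  0 < A -> 0 < sm -> 0 < ss -> 0 < mu -> 0 < rho -> 0 < beta -> 0 < r -> 0 < CI ->
  endemic_eq A sm ss mu rho beta r CI (Sv, Im, Is) -> Is < CI ->
  (Sv, Im, Is) = Estar A sm mu rho beta r.
Proof.
  intros HA Hsm Hss Hmu Hrho Hbeta Hr HCI [HS [HI [HIs [E1 [E2 E3]]]]] Hlt.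
  unfold rhs_S, rhs_Im, rhs_Is in *.
  rewrite pos_part_neg in E1, E2 by lra. rewrite T_lt in E3 by lra.
  assert (H1: Im * (sm*Sv - (mu+rho+beta)) = 0).
  { lra. }
  destruct (Rmult_integral _ _ H1) as [H|H]; [lra|].
  assert (HSv: Sv = (mu+beta+rho)/sm).
  { apply (Rmult_eq_reg_l sm); [|lra].
    replace (sm * ((mu+beta+rho)/sm)) with (mu+beta+rho) by (field; lra). lra. }
  subst Sv.
  assert (HIm: Im = mu * (Rzero A sm mu rho beta - 1) / sm).
  { apply (Rmult_eq_reg_l (mu+beta+rho)); [|lra].
    unfold Rzero. transitivity (A - mu*((mu+beta+rho)/sm)).
    - replace (sm * ((mu + beta + rho) / sm)) with (mu+beta+rho) in E1 by (field; lra). lra.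
    - field. nz. }
  subst Im.
  assert (HIs2: Is = mu * beta * (Rzero A sm mu rho beta - 1) / (sm * (mu + r))).
  { apply (Rmult_eq_reg_l (mu+r)); [|lra].
    transitivity (beta * (mu * (Rzero A sm mu rho beta - 1) / sm)). lra. field. nz. }
  rewrite HIs2. reflexivity.
Qed.

Definition Ft A sm mu rho beta r CI t : R*R*R :=
  ((mu+beta+rho)*(Rzero A sm mu rho beta - t)/sm, mu*t/sm, beta*t/sm - r*CI/mu).
Definition gq A sm ss mu rho beta r CI t : R :=
  t^2 - (Rzero A sm mu rho beta + pp sm ss mu beta r CI - qq sm ss mu beta)*t
  + pp sm ss mu beta r CI * Rzero A sm mu rho beta.

Lemma key_id A sm ss mu rho beta r CI t :
  0 < A -> 0 < sm -> 0 < ss -> 0 < mu -> 0 < rho -> 0 < beta -> 0 < r -> 0 < CI ->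
  let Sv := (mu+beta+rho)*(Rzero A sm mu rho beta - t)/sm in
  let Im := mu*t/sm in let Is := beta*t/sm - r*CI/mu in
  sm*Sv*Im + ss*Sv*(Is-CI) - (mu+rho+beta)*Im =
  - gq A sm ss mu rho beta r CI t * ((mu+beta+rho)*(mu*sm+beta*ss))/sm^2.
Proof.
  intros. unfold Sv, Im, Is, gq, pp, qq, Rzero. field. nz.
Qed.

Lemma branch_ge A sm ss mu rho beta r CI Sv Im Is :
  0 < A -> 0 < sm -> 0 < ss -> 0 < mu -> 0 < rho -> 0 < beta -> 0 < r -> 0 < CI ->
  endemic_eq A sm ss mu rho beta r CI (Sv, Im, Is) -> CI <= Is ->
  exists t, (Sv, Im, Is) = Ft A sm mu rho beta r CI t /\
    gq A sm ss mu rho beta r CI t = 0 /\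
    sm*(mu+r)*CI/(mu*beta) <= t /\ t < Rzero A sm mu rho beta.
Proof.
  intros HA Hsm Hss Hmu Hrho Hbeta Hr HCI [HS [HI [HIs [E1 [E2 E3]]]]] Hge.
  unfold rhs_S, rhs_Im, rhs_Is in *.
  rewrite pos_part_pos in E1, E2 by lra. rewrite T_ge in E3 by lra.
  set (t := Rzero A sm mu rho beta - sm*Sv/(mu+beta+rho)).
  assert (HSv: Sv = (mu+beta+rho)*(Rzero A sm mu rho beta - t)/sm) by (unfold t; field; nz).
  assert (KIm: (mu+beta+rho)*Im = A - mu*Sv) by lra.
  assert (HIm: Im = mu*t/sm).
  { apply (Rmult_eq_reg_l (mu+beta+rho)); [|lra]. rewrite KIm.
    unfold t, Rzero. field. nz. }
  assert (HIs2: Is = beta*t/sm - r*CI/mu).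
  { apply (Rmult_eq_reg_l mu); [|lra].
    transitivity (beta*Im - r*CI). lra. rewrite HIm. field. nz. }
  exists t. split; [|split; [|split]].
  - unfold Ft. rewrite <- HSv, <- HIm, <- HIs2. reflexivity.
  - pose proof (key_id A sm ss mu rho beta r CI t HA Hsm Hss Hmu Hrho Hbeta Hr HCI) as K.
    cbv zeta in K. rewrite <- HSv, <- HIm, <- HIs2 in K. rewrite E2 in K.
    assert (Hpos: 0 < ((mu+beta+rho)*(mu*sm+beta*ss))/sm^2).
    { apply Rdiv_lt_0_compat; [apply Rmult_lt_0_compat; nra | apply pow_lt; lra]. }
    nra.
  - assert (Hd: Is - CI = beta/sm*(t - sm*(mu+r)*CI/(mu*beta))) by (rewrite HIs2; field; nz).
    assert (0 < beta/sm) by (apply Rdiv_lt_0_compat; lra).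
    nra.
  - assert (0 < sm*Sv/(mu+beta+rho)) by (apply Rdiv_lt_0_compat; nra).
    unfold t. lra.
Qed.

Lemma branch_b A sm ss mu rho beta r CI t :
  0 < A -> 0 < sm -> 0 < ss -> 0 < mu -> 0 < rho -> 0 < beta -> 0 < r -> 0 < CI ->
  gq A sm ss mu rho beta r CI t = 0 ->
  sm*(mu+r)*CI/(mu*beta) <= t -> t < Rzero A sm mu rho beta ->
  endemic_eq A sm ss mu rho beta r CI (Ft A sm mu rho beta r CI t) /\
  CI + beta/sm*(t - sm*(mu+r)*CI/(mu*beta)) = snd (Ft A sm mu rho beta r CI t).
Proof.
  intros HA Hsm Hss Hmu Hrho Hbeta Hr HCI Hg Hc HR.
  pose proof (key_id A sm ss mu rho beta r CI t HA Hsm Hss Hmu Hrho Hbeta Hr HCI) as K.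
  cbv zeta in K. rewrite Hg in K.
  assert (Hcpos: 0 < sm*(mu+r)*CI/(mu*beta)).
  { apply Rdiv_lt_0_compat; [apply Rmult_lt_0_compat; [apply Rmult_lt_0_compat|]|apply Rmult_lt_0_compat]; lra. }
  assert (Hd: beta*t/sm - r*CI/mu - CI = beta/sm*(t - sm*(mu+r)*CI/(mu*beta))) by (field; nz).
  assert (Hbs: 0 < beta/sm) by (apply Rdiv_lt_0_compat; lra).
  assert (Hd0: 0 <= beta/sm*(t - sm*(mu+r)*CI/(mu*beta))) by (apply Rmult_le_pos; lra).
  split; [|simpl; lra].
  unfold endemic_eq, Ft, rhs_S, rhs_Im, rhs_Is.
  rewrite pos_part_pos by lra. rewrite T_ge by lra.
  assert (E2: sm * ((mu + beta + rho) * (Rzero A sm mu rho beta - t) / sm) * (mu * t / sm) +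
      ss * ((mu + beta + rho) * (Rzero A sm mu rho beta - t) / sm) * (beta * t / sm - r * CI / mu - CI) -
      (mu + rho + beta) * (mu * t / sm) = 0) by (rewrite K; field; nz).
  assert (Esum: A - mu * ((mu + beta + rho) * (Rzero A sm mu rho beta - t) / sm) - (mu+beta+rho)*(mu*t/sm) = 0)
    by (unfold Rzero; field; nz).
  assert (0 < (mu + beta + rho) * (Rzero A sm mu rho beta - t) / sm)
    by (apply Rdiv_lt_0_compat; [apply Rmult_lt_0_compat|]; lra).
  assert (0 < mu*t/sm) by (apply Rdiv_lt_0_compat; [apply Rmult_lt_0_compat|]; lra).
  split; [lra|]. split; [lra|]. split; [lra|]. split; [lra|]. split; [lra|].
  field; nz.
Qed.

Lemma E1_Ft A sm ss mu rho beta r CI :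
  0 < A -> 0 < sm -> 0 < ss -> 0 < mu -> 0 < rho -> 0 < beta -> 0 < r -> 0 < CI ->
  E1star A sm ss mu rho beta r CI = Ft A sm mu rho beta r CI
   ((Rzero A sm mu rho beta + pp sm ss mu beta r CI - qq sm ss mu beta
     + sqrt ((Rzero A sm mu rho beta - pp sm ss mu beta r CI - qq sm ss mu beta)^2
             - 4 * pp sm ss mu beta r CI * qq sm ss mu beta))/2).
Proof.
  intros. unfold E1star, Ft, S1star, discS.
  set (R0 := Rzero A sm mu rho beta). set (p := pp sm ss mu beta r CI).
  set (q := qq sm ss mu beta). set (s := sqrt _).
  f_equal; [f_equal|]; field; nz.
Qed.

Lemma Tle r CI Is : Is <= CI -> Ttreat r CI Is = r*Is.
Proof. intros; unfold Ttreat; destruct (Rlt_dec Is CI); [lra|].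
  replace Is with CI by lra. reflexivity. Qed.

Theorem theorem2p1 (A sm ss mu rho beta r CI : R) :
  0 < A -> 0 < sm -> 0 < ss -> 0 < mu -> 0 < rho -> 0 < beta -> 0 < r -> 0 < CI ->
  Rzero A sm mu rho beta > sm * (mu + r) * CI / (mu * beta) ->
  beta ^ 2 * ss / ((mu + r) * sm ^ 2) <= CI ->
  ((1 < Rzero A sm mu rho beta <= 1 + sm * (mu + r) / (mu * beta) * CI ->
    endemic_eq A sm ss mu rho beta r CI (Estar A sm mu rho beta r) /\
    forall E, endemic_eq A sm ss mu rho beta r CI E -> E = Estar A sm mu rho beta r)
   /\
   (Rzero A sm mu rho beta > 1 + sm * (mu + r) / (mu * beta) * CI ->
    0 <= discS A sm ss mu rho beta r CI /\
    endemic_eq A sm ss mu rho beta r CI (E1star A sm ss mu rho beta r CI) /\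
    snd (E1star A sm ss mu rho beta r CI) > CI /\
    forall E, endemic_eq A sm ss mu rho beta r CI E ->
      E = E1star A sm ss mu rho beta r CI)).
Proof.
  intros HA Hsm Hss Hmu Hrho Hbeta Hr HCI H1 H2.
  assert (Hcpos: 0 < sm*(mu+r)*CI/(mu*beta)).
  { apply Rdiv_lt_0_compat; [apply Rmult_lt_0_compat; [apply Rmult_lt_0_compat|]|apply Rmult_lt_0_compat]; lra. }
  assert (Hth: 1 + sm * (mu + r) / (mu * beta) * CI = 1 + sm*(mu+r)*CI/(mu*beta)) by (field; nz).
  rewrite Hth. clear Hth.
  set (c := sm*(mu+r)*CI/(mu*beta)) in *.
  assert (Hcdef: c = sm*(mu+r)*CI/(mu*beta)) by reflexivity. clearbody c.
  assert (Hqpos: 0 < qq sm ss mu beta) by (unfold qq; apply Rdiv_lt_0_compat; nra).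
  assert (Hp: pp sm ss mu beta r CI = c*(1 - qq sm ss mu beta)) by (rewrite Hcdef; unfold pp, qq; field; nz).
  assert (H2': beta^2*ss <= CI*((mu+r)*sm^2)).
  { replace (beta^2*ss) with (beta ^ 2 * ss / ((mu + r) * sm ^ 2) * ((mu+r)*sm^2)) by (field; nz).
    apply Rmult_le_compat_r; [|lra]. apply Rmult_le_pos; [lra|]. apply pow_le; lra. }
  assert (Hqc: 1 <= qq sm ss mu beta * (1 + c)).
  { assert (Hid: qq sm ss mu beta * (1 + c) - 1 =
       (CI*((mu+r)*sm^2) - beta^2*ss) / (beta*(mu*sm+beta*ss))) by (rewrite Hcdef; unfold qq; field; nz).
    assert (0 <= (CI*((mu+r)*sm^2) - beta^2*ss) / (beta*(mu*sm+beta*ss))).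
    { unfold Rdiv. apply Rmult_le_pos; [lra|]. apply Rlt_le, Rinv_0_lt_compat. apply Rmult_lt_0_compat; [lra|]; apply Rplus_lt_0_compat; apply Rmult_lt_0_compat; lra. }
    lra. }
  assert (HIsstar: mu * beta * (Rzero A sm mu rho beta - 1) / (sm * (mu + r)) - CI
      = mu*beta/(sm*(mu+r)) * (Rzero A sm mu rho beta - 1 - c)) by (rewrite Hcdef; field; nz).
  assert (Hk: 0 < mu*beta/(sm*(mu+r))) by (apply Rdiv_lt_0_compat; nra).
  split.
  - intros [HR1 HR2].
    assert (Hle: mu * beta * (Rzero A sm mu rho beta - 1) / (sm * (mu + r)) <= CI).
    { assert (mu*beta/(sm*(mu+r)) * (Rzero A sm mu rho beta - 1 - c) <= 0).
      { assert (0 <= mu*beta/(sm*(mu+r)) * (c + 1 - Rzero A sm mu rho beta)) by (apply Rmult_le_pos; lra).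
        lra. }
      lra. }
    split.
    + unfold endemic_eq, Estar, rhs_S, rhs_Im, rhs_Is.
      rewrite pos_part_neg by lra. rewrite Tle by lra.
      assert (0 < (mu + beta + rho) / sm) by (apply Rdiv_lt_0_compat; lra).
      assert (0 < mu * (Rzero A sm mu rho beta - 1) / sm) by (apply Rdiv_lt_0_compat; nra).
      assert (0 < mu * beta * (Rzero A sm mu rho beta - 1) / (sm * (mu + r)))
        by (apply Rdiv_lt_0_compat; repeat apply Rmult_lt_0_compat; lra).
      split; [lra|]. split; [lra|]. split; [lra|].
      split; [unfold Rzero; field; nz|]. split; field; nz.
    + intros [[Sv Im] Is] HE.
      destruct (Rlt_or_le Is CI) as [Hl|Hl].
      * exact (branch_lt A sm ss mu rho beta r CI Sv Im Is HA Hsm Hss Hmu Hrho Hbeta Hr HCI HE Hl).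
      * destruct (branch_ge A sm ss mu rho beta r CI Sv Im Is HA Hsm Hss Hmu Hrho Hbeta Hr HCI HE Hl)
          as [t [Heq [Hg [Hct HtR]]]].
        unfold gq in Hg. rewrite <- Hcdef in Hct.
        destruct (core1 (Rzero A sm mu rho beta) (pp sm ss mu beta r CI) (qq sm ss mu beta) c t
          Hcpos Hqpos Hp Hqc HR2 Hg Hct) as [Ht HR0].
        rewrite Heq. unfold Ft, Estar. rewrite Ht, HR0, Hcdef.
        f_equal; [f_equal|]; field; nz.
  - intros HR.
    destruct (core3 (Rzero A sm mu rho beta) (pp sm ss mu beta r CI) (qq sm ss mu beta) c
       Hcpos Hqpos Hp HR) as [HD [Hg1 [Hc1 HR1]]].
    rewrite (E1_Ft A sm ss mu rho beta r CI HA Hsm Hss Hmu Hrho Hbeta Hr HCI).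
    destruct (branch_b A sm ss mu rho beta r CI _ HA Hsm Hss Hmu Hrho Hbeta Hr HCI Hg1 ltac:(rewrite <- Hcdef; lra) HR1)
      as [Hend Hsnd].
    split; [exact HD|]. split; [exact Hend|]. split.
    + rewrite <- Hsnd. rewrite <- Hcdef.
      assert (0 < beta/sm) by (apply Rdiv_lt_0_compat; lra).
      assert (0 < beta / sm * ((Rzero A sm mu rho beta + pp sm ss mu beta r CI - qq sm ss mu beta +
          sqrt ((Rzero A sm mu rho beta - pp sm ss mu beta r CI - qq sm ss mu beta) ^ 2 -
          4 * pp sm ss mu beta r CI * qq sm ss mu beta)) / 2 - c)) by (apply Rmult_lt_0_compat; lra).
      lra.
    + intros [[Sv Im] Is] HE.
      destruct (Rlt_or_le Is CI) as [Hl|Hl].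
      * exfalso. pose proof (branch_lt A sm ss mu rho beta r CI Sv Im Is HA Hsm Hss Hmu Hrho Hbeta Hr HCI HE Hl) as Hq.
        unfold Estar in Hq. injection Hq as _ _ HIs.
        assert (0 < mu*beta/(sm*(mu+r)) * (Rzero A sm mu rho beta - 1 - c)) by (apply Rmult_lt_0_compat; lra).
        lra.
      * destruct (branch_ge A sm ss mu rho beta r CI Sv Im Is HA Hsm Hss Hmu Hrho Hbeta Hr HCI HE Hl)
          as [t [Heq [Hg [Hct HtR]]]].
        unfold gq in Hg. rewrite <- Hcdef in Hct.
        rewrite Heq. f_equal.
        exact (core2 _ _ _ c t Hcpos Hqpos Hp HR Hg Hct).
Qed.
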